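(* For each integer $n \geq 1$ there is a group word $w(x_0, x_1, \ldots, x_{n-1}, y)$ in $n+1$ variables such that the following holds: if $G$ is any group and $f: (G \setminus \{1_G\})^n \rightarrow G$ is any function, then there exist a group $H$ and an element $c \in H$ such that (a) $G \leq H$; (b) $c \in H \setminus G$; (c) for all $\overline{g} = (g_0,\ldots,g_{n-1}) \in (G\setminus \{1_G\})^n$ we have $w(g_0,\ldots,g_{n-1}, c) = f(\overline{g})$ in $H$; (d) $H$ is generated by $G \cup \{c\}$. *)

(* Defs.v *)
From mathcomp Require Import all_boot.
Set Implicit Arguments.
Unset Strict Implicit.
Unset Printing Implicit Defensive.

Record group_on (T : Type) := GroupOn {
  gmul : T -> T -> T;
  gone : T;
  ginv : T -> T;
  gmulA : forall x y z, gmul x (gmul y z) = gmul (gmul x y) z;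
  gmul1 : forall x, gmul gone x = x;
  gmulV : forall x, gmul (ginv x) x = gone
}.

Inductive word (n : nat) : Type :=
| wx : 'I_n -> word n
| wy : word n
| wone : word n
| wmul : word n -> word n -> word n
| winv : word n -> word n.

Fixpoint weval (n : nat) (T : Type) (G : group_on T)
    (g : 'I_n -> T) (c : T) (w : word n) : T :=
  match w with
  | wx i => g i
  | wy => c
  | wone => gone G
  | wmul u v => gmul G (weval G g c u) (weval G g c v)
  | winv u => ginv G (weval G g c u)
  end.

Definition is_hom (T U : Type) (G : group_on T) (H : group_on U) (f : T -> U) :=
  forall x y, f (gmul G x y) = gmul H (f x) (f y).

Definition is_subgroup (U : Type) (H : group_on U) (S : U -> Prop) :=
  S (gone H) /\ (forall x y, S x -> S y -> S (gmul H x y)) /\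
  (forall x, S x -> S (ginv H x)).

Definition generated_by (U : Type) (H : group_on U) (A : U -> Prop) :=
  forall S, is_subgroup H S -> (forall a, A a -> S a) -> forall h, S h.

(* Main.v *)
Require Import Defs.
From mathcomp Require Import all_boot zify.
From Stdlib Require Import ClassicalEpsilon FunctionalExtensionality ProofIrrelevance PropExtensionality ZArith Lia List.
Import ListNotations.
Set Implicit Arguments.
Unset Strict Implicit.


Section GroupLemmas.
Variables (T : Type) (G : group_on T).
Local Notation "x * y" := (gmul G x y).
Local Notation "1" := (gone G).
Local Notation "x ^-1" := (ginv G x).

Lemma gmulA' x y z : x * (y * z) = x * y * z. Proof. apply gmulA. Qed.
Lemma gmulVr x : x * x^-1 = 1.
Proof.
  assert (E : (x * x^-1) * (x * x^-1) = x * x^-1).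
  { rewrite -gmulA. rewrite (gmulA G (x^-1) x (x^-1)). rewrite gmulV gmul1. reflexivity. }
  assert (E2 : (x * x^-1)^-1 * ((x * x^-1) * (x * x^-1)) = (x * x^-1)^-1 * (x * x^-1)) by (rewrite E; reflexivity).
  rewrite gmulA gmulV gmul1 in E2. exact E2.
Qed.
Lemma gmul1r x : x * 1 = x.
Proof. rewrite -(gmulV G x) gmulA gmulVr. apply gmul1. Qed.
Lemma gmulKl x y : x^-1 * (x * y) = y.
Proof. rewrite gmulA gmulV. apply gmul1. Qed.
Lemma gmulKVl x y : x * (x^-1 * y) = y.
Proof. rewrite gmulA gmulVr. apply gmul1. Qed.
Lemma gmulKr x y : x * y * y^-1 = x.
Proof. rewrite -gmulA gmulVr. apply gmul1r. Qed.
Lemma gmulKVr x y : x * y^-1 * y = x.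
Proof. rewrite -gmulA gmulV. apply gmul1r. Qed.
Lemma gcancl x y z : x * y = x * z -> y = z.
Proof. intro H. rewrite -(gmulKl x y) H. apply gmulKl. Qed.
Lemma gcancr x y z : y * x = z * x -> y = z.
Proof. intro H. rewrite -(gmulKr y x) H. apply gmulKr. Qed.
Lemma ginv_uniq x y : x * y = 1 -> y = x^-1.
Proof. intro H. apply (gcancl (x:=x)). rewrite H. symmetry. apply gmulVr. Qed.
Lemma ginvK x : (x^-1)^-1 = x.
Proof. symmetry. apply ginv_uniq. apply gmulV. Qed.
Lemma ginvM x y : (x * y)^-1 = y^-1 * x^-1.
Proof. symmetry. apply ginv_uniq. rewrite gmulA gmulKr. apply gmulVr. Qed.
Lemma ginv1 : 1^-1 = 1.
Proof. symmetry. apply ginv_uniq. apply gmul1. Qed.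
Lemma gmul_eq1 x y : x * y = 1 -> x = y^-1.
Proof. intro H. apply (gcancr (x:=y)). rewrite H. symmetry; apply gmulV. Qed.
Lemma ginv_inj x y : x^-1 = y^-1 -> x = y.
Proof. intro H. rewrite -(ginvK x) H. apply ginvK. Qed.
Lemma gmul_left_eq1 x y : x * y = x -> y = 1.
Proof. intro H. apply (gcancl (x:=x)). rewrite H gmul1r. reflexivity. Qed.
Lemma gmul_right_eq1 x y : x * y = y -> x = 1.
Proof. intro H. apply (gcancr (x:=y)). rewrite H gmul1. reflexivity. Qed.
End GroupLemmas.

Section Homs.
Variables (T U : Type) (G : group_on T) (H : group_on U) (f : T -> U) (hf : is_hom G H f).
Lemma hom1 : f (gone G) = gone H.
Proof.
  apply (gmul_left_eq1 (G:=H) (x := f (gone G))). rewrite -hf. rewrite gmul1. reflexivity.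
Qed.
Lemma homV x : f (ginv G x) = ginv H (f x).
Proof. apply ginv_uniq. rewrite -hf gmulVr. apply hom1. Qed.
Lemma hom_inj_of_ker : (forall x, f x = gone H -> x = gone G) -> injective f.
Proof.
  intros Hk x y E. apply (gcancr (G:=G) (x := ginv G y)). rewrite gmulVr. apply Hk.
  rewrite hf homV E. apply gmulVr.
Qed.
End Homs.

Lemma hom_comp (A B C : Type) (GA : group_on A) (GB : group_on B) (GC : group_on C)
  (f : A -> B) (g : B -> C) : is_hom GA GB f -> is_hom GB GC g -> is_hom GA GC (fun x => g (f x)).
Proof. intros Hf Hg x y. rewrite Hf Hg. reflexivity. Qed.

Definition pick {A : Type} (d : A) (P : A -> Prop) : A :=
  match excluded_middle_informative (exists x, P x) with
  | left H => proj1_sig (constructive_indefinite_description P H)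
  | right _ => d
  end.
Lemma pick_spec {A} (d : A) (P : A -> Prop) : (exists x, P x) -> P (pick d P).
Proof.
  intro H. unfold pick. destruct (excluded_middle_informative _) as [H'|H'].
  - apply proj2_sig.
  - contradiction.
Qed.

Definition dec (P : Prop) : {P} + {~P} := excluded_middle_informative P.

Record perm (X : Type) := Perm { pfun : X -> X; pinv : X -> X;
  pK : forall x, pinv (pfun x) = x; pKV : forall x, pfun (pinv x) = x }.
Arguments Perm {X}.

Lemma perm_ext X (p q : perm X) : (forall x, pfun p x = pfun q x) -> p = q.
Proof.
  destruct p as [f g K KV], q as [f' g' K' KV']; simpl. intro E.
  assert (Ef : f = f') by (apply functional_extensionality; exact E).
  subst f'.
  assert (Eg : g = g').
  { apply functional_extensionality; intro x. rewrite -{1}(KV' x). rewrite K. reflexivity. }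
  subst g'. f_equal; apply proof_irrelevance.
Qed.

Section PermGroup.
Variable X : Type.
Definition pmul (p q : perm X) : perm X.
Proof.
  refine (Perm (fun x => pfun p (pfun q x)) (fun x => pinv q (pinv p x)) _ _).
  - intro x. rewrite pK. apply pK.
  - intro x. rewrite pKV. apply pKV.
Defined.
Definition pone : perm X := Perm (fun x => x) (fun x => x) (fun x => erefl x) (fun x => erefl x).
Definition pinvp (p : perm X) : perm X := Perm (pinv p) (pfun p) (pKV p) (pK p).
Definition permG : group_on (perm X).
Proof.
  refine (@GroupOn _ pmul pone pinvp _ _ _).
  - intros. apply perm_ext. reflexivity.
  - intros. apply perm_ext. reflexivity.
  - intro p. apply perm_ext. intro y. simpl. apply pK.
Defined.
End PermGroup.

Definition prodG (A B : Type) (GA : group_on A) (GB : group_on B) : group_on (A * B).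
Proof.
  refine (@GroupOn _ (fun x y => (gmul GA (fst x) (fst y), gmul GB (snd x) (snd y)))
                  (gone GA, gone GB) (fun x => (ginv GA (fst x), ginv GB (snd x))) _ _ _).
  - intros [] [] []; simpl. rewrite !gmulA. reflexivity.
  - intros []; simpl. rewrite !gmul1. reflexivity.
  - intros []; simpl. rewrite !gmulV. reflexivity.
Defined.

Definition ZG : group_on Z.
Proof.
  refine (@GroupOn _ Z.add 0%Z Z.opp _ _ _); intros; lia.
Defined.

Section Gen.
Variables (U : Type) (M : group_on U) (A : U -> Prop).
Inductive Gen : U -> Prop :=
| gen_base x : A x -> Gen x
| gen_one : Gen (gone M)
| gen_mul x y : Gen x -> Gen y -> Gen (gmul M x y)
| gen_inv x : Gen x -> Gen (ginv M x).
Definition GenT := {x : U | Gen x}.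
Lemma GenT_eq (x y : GenT) : proj1_sig x = proj1_sig y -> x = y.
Proof. destruct x, y; simpl; intro; subst; f_equal; apply proof_irrelevance. Qed.
Definition genG : group_on GenT.
Proof.
  refine (@GroupOn _ (fun x y => exist _ (gmul M (proj1_sig x) (proj1_sig y)) (gen_mul (proj2_sig x) (proj2_sig y)))
                  (exist _ (gone M) gen_one)
                  (fun x => exist _ (ginv M (proj1_sig x)) (gen_inv (proj2_sig x))) _ _ _);
  intros; apply GenT_eq; simpl; [apply gmulA | apply gmul1 | apply gmulV].
Defined.
Lemma genG_generated : generated_by genG (fun h => A (proj1_sig h)).
Proof.
  intros S [S1 [S2 S3]] HA h. destruct h as [x0 p0].
  refine (@Gen_ind (fun x => forall q : Gen x, S (exist _ x q)) _ _ _ _ x0 p0 p0).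
  - intros x Hx p. apply HA. simpl. exact Hx.
  - intro p. assert (E : exist Gen (gone M) p = gone genG) by (apply GenT_eq; reflexivity).
    rewrite E. exact S1.
  - intros x y px IHx py IHy p.
    assert (E : exist Gen (gmul M x y) p = gmul genG (exist _ x px) (exist _ y py)) by (apply GenT_eq; reflexivity).
    rewrite E. apply S2; [apply IHx | apply IHy].
  - intros x px IHx p.
    assert (E : exist Gen (ginv M x) p = ginv genG (exist _ x px)) by (apply GenT_eq; reflexivity).
    rewrite E. apply S3; apply IHx.
Qed.
End Gen.

Section SD.
Variables (T : Type) (G : group_on T) (J : Type).
Local Notation "x * y" := (gmul G x y).

Local Notation letter := ((T * J) * bool)%type.
Definition linv (x : letter) : letter := (fst x, negb (snd x)).
Definition relab (k : T) (x : letter) : letter := ((k * fst (fst x), snd (fst x)), snd x).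

Definition cr (x : letter) (w : list letter) : list letter :=
  match w with
  | [] => [x]
  | y :: w' => if dec (y = linv x) then w' else x :: w
  end.

Fixpoint reduced (w : list letter) : Prop :=
  match w with
  | x :: ((y :: _) as w') => y <> linv x /\ reduced w'
  | _ => True
  end.

Lemma linvK x : linv (linv x) = x.
Proof. destruct x as [a b]; unfold linv; simpl; rewrite negbK; reflexivity. Qed.
Lemma linv_neq x : linv x <> x.
Proof. destruct x as [a b]; unfold linv; simpl; intro E; injection E; destruct b; discriminate. Qed.
Lemma linv_inj x y : linv x = linv y -> x = y.
Proof. intro E. rewrite -(linvK x) -(linvK y) E. reflexivity. Qed.

Lemma reduced_tail x w : reduced (x :: w) -> reduced w.
Proof. destruct w; simpl; tauto. Qed.

Lemma cr_reduced x w : reduced w -> reduced (cr x w).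
Proof.
  destruct w as [|y w']; simpl; auto.
  intro H. destruct (dec (y = linv x)) as [E|E].
  - exact (reduced_tail H).
  - simpl. split; auto.
Qed.

Lemma cr_inv x w : reduced w -> cr (linv x) (cr x w) = w.
Proof.
  destruct w as [|y w']; simpl.
  - intros _. destruct (dec (x = linv (linv x))) as [E|E]; auto. exfalso; apply E; rewrite linvK; reflexivity.
  - intro H. destruct (dec (y = linv x)) as [E|E].
    + subst y. destruct w' as [|z w'']; simpl.
      * reflexivity.
      * destruct (dec (z = linv (linv x))) as [E2|E2].
        -- simpl in H. destruct H as [H _]. contradiction.
        -- reflexivity.
    + simpl. destruct (dec (x = linv (linv x))) as [E2|E2]; auto. exfalso; apply E2; rewrite linvK; reflexivity.
Qed.

Definition mulw (u v : list letter) : list letter := fold_right cr v u.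

Lemma mulw_reduced u v : reduced v -> reduced (mulw u v).
Proof. induction u; simpl; auto. intro H. apply cr_reduced. auto. Qed.

Lemma mulw_cr x z w : reduced w -> mulw (cr x z) w = cr x (mulw z w).
Proof.
  intro Hw. destruct z as [|y z']; simpl; auto.
  destruct (dec (y = linv x)) as [E|E]; simpl; auto.
  subst y. rewrite -{1}(linvK x). rewrite cr_inv; auto. apply mulw_reduced; auto.
Qed.

Lemma mulw_assoc u v w : reduced v -> reduced w -> mulw (mulw u v) w = mulw u (mulw v w).
Proof.
  intros Hv Hw. induction u as [|x u IH]; simpl; auto.
  rewrite mulw_cr; auto. rewrite IH. reflexivity.
Qed.

Lemma mulw_app u1 u2 v : mulw (app u1 u2) v = mulw u1 (mulw u2 v).
Proof. unfold mulw. apply fold_right_app. Qed.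

Lemma mulw_nil_r u : reduced u -> mulw u [] = u.
Proof.
  induction u as [|x u IH]; simpl; auto.
  intro H. rewrite IH. 2: exact (reduced_tail H).
  destruct u as [|y u']; simpl; auto.
  destruct (dec (y = linv x)); auto. simpl in H. tauto.
Qed.

Definition invw (u : list letter) : list letter := rev (map linv u).

Lemma mulw_invw u w : reduced w -> mulw (invw u) (mulw u w) = w.
Proof.
  intro Hw. induction u as [|x u IH]; simpl; auto.
  unfold invw; simpl. rewrite mulw_app. simpl.
  rewrite cr_inv. 2: apply mulw_reduced; auto.
  exact IH.
Qed.

Lemma mulw_invw_self u : reduced u -> mulw (invw u) u = [].
Proof. intro H. rewrite -{2}(mulw_nil_r H). apply mulw_invw. simpl; auto. Qed.

Definition red (w : list letter) : list letter := mulw w [].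
Lemma red_reduced w : reduced (red w).
Proof. apply mulw_reduced. simpl; auto. Qed.
Lemma red_id w : reduced w -> red w = w.
Proof. apply mulw_nil_r. Qed.
Lemma mulw_red_l u v : reduced v -> mulw (red u) v = mulw u v.
Proof. intro Hv. unfold red. rewrite mulw_assoc; simpl; auto. Qed.
Lemma red_mulw u v : reduced v -> red (mulw u v) = mulw u v.
Proof. intro H. apply red_id. apply mulw_reduced; auto. Qed.
Lemma red_app u v : red (app u v) = mulw u (red v).
Proof. unfold red. rewrite mulw_app. reflexivity. Qed.

Lemma relab_linv k x : relab k (linv x) = linv (relab k x).
Proof. destruct x as [[h j] b]; reflexivity. Qed.
Lemma relab_inj k x y : relab k x = relab k y -> x = y.
Proof.
  destruct x as [[h j] b], y as [[h' j'] b']; unfold relab; simpl.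
  intro E. injection E as E1 E2 E3. apply gcancl in E1. subst. reflexivity.
Qed.
Lemma relab_mul k k' x : relab (k * k') x = relab k (relab k' x).
Proof. destruct x as [[h j] b]; unfold relab; simpl. rewrite gmulA. reflexivity. Qed.
Lemma relab_one x : relab (gone G) x = x.
Proof. destruct x as [[h j] b]; unfold relab; simpl. rewrite gmul1. reflexivity. Qed.
Lemma map_relab_one w : map (relab (gone G)) w = w.
Proof. induction w; simpl; auto. rewrite relab_one IHw. reflexivity. Qed.
Lemma map_relab_mul k k' w : map (relab (k * k')) w = map (relab k) (map (relab k') w).
Proof. induction w; simpl; auto. rewrite relab_mul IHw. reflexivity. Qed.

Lemma map_relab_cr k x w : map (relab k) (cr x w) = cr (relab k x) (map (relab k) w).
Proof.
  destruct w as [|y w']; simpl; auto.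
  destruct (dec (y = linv x)) as [E|E]; destruct (dec (relab k y = linv (relab k x))) as [E2|E2]; simpl; auto.
  - subst. rewrite relab_linv in E2. tauto.
  - rewrite -relab_linv in E2. apply relab_inj in E2. contradiction.
Qed.
Lemma map_relab_mulw k u v : map (relab k) (mulw u v) = mulw (map (relab k) u) (map (relab k) v).
Proof. induction u; simpl; auto. rewrite map_relab_cr IHu. reflexivity. Qed.
Lemma reduced_map_relab k w : reduced w -> reduced (map (relab k) w).
Proof.
  induction w as [|x w IH]; simpl; auto.
  destruct w as [|y w']; simpl; auto.
  intros [H1 H2]. split.
  - intro E. rewrite -relab_linv in E. apply relab_inj in E. contradiction.
  - apply IH. exact H2.
Qed.
Lemma map_relab_invw k u : map (relab k) (invw u) = invw (map (relab k) u).
Proof. unfold invw. rewrite map_rev !map_map. reflexivity. Qed.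

(* the semidirect product F(T x J) x| G *)
Definition SDt := {p : list letter * T | reduced (fst p)}.
Lemma SD_eq (p q : SDt) : proj1_sig p = proj1_sig q -> p = q.
Proof. destruct p, q; simpl; intro; subst; f_equal; apply proof_irrelevance. Qed.
Definition mkSD (w : list letter) (k : T) : SDt := exist _ (red w, k) (red_reduced w).
Definition sdw (p : SDt) := fst (proj1_sig p).
Definition sdk (p : SDt) := snd (proj1_sig p).
Lemma sdw_reduced p : reduced (sdw p).
Proof. exact (proj2_sig p). Qed.
Lemma SD_eta p : p = mkSD (sdw p) (sdk p).
Proof. apply SD_eq. destruct p as [[w k] H]. simpl. rewrite red_id; auto. Qed.
Lemma mkSD_eq w k w' k' : red w = red w' -> k = k' -> mkSD w k = mkSD w' k'.
Proof. intros E1 E2. apply SD_eq. simpl. rewrite E1 E2. reflexivity. Qed.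

Definition sdmul (p q : SDt) : SDt := mkSD (mulw (sdw p) (map (relab (sdk p)) (sdw q))) (sdk p * sdk q).
Definition sdone : SDt := mkSD [] (gone G).
Definition sdinv (p : SDt) : SDt := mkSD (map (relab (ginv G (sdk p))) (invw (sdw p))) (ginv G (sdk p)).

Lemma sdw_mk w k : sdw (mkSD w k) = red w. Proof. reflexivity. Qed.
Lemma sdk_mk w k : sdk (mkSD w k) = k. Proof. reflexivity. Qed.

Lemma sdmul_mk w k w' k' : sdmul (mkSD w k) (mkSD w' k') = mkSD (app w (map (relab k) w')) (k * k').
Proof.
  apply mkSD_eq; [|reflexivity]. unfold sdmul. rewrite sdw_mk sdw_mk sdk_mk.
  rewrite red_mulw. 2: apply reduced_map_relab, red_reduced.
  rewrite red_app mulw_red_l. 2: apply reduced_map_relab, red_reduced.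
  unfold red. rewrite map_relab_mulw. simpl. reflexivity.
Qed.

Lemma invw_invw u : invw (invw u) = u.
Proof. unfold invw. rewrite map_rev map_map rev_involutive. transitivity (map id u). 2: apply map_id.
  apply map_ext. intro; apply linvK. Qed.
Lemma mulw_invw_r u v : reduced v -> mulw u (mulw (invw u) v) = v.
Proof. intro H. rewrite -{1}(invw_invw u). apply mulw_invw. exact H. Qed.
Lemma mulw_red_invw w v : reduced v -> mulw (invw (red w)) v = mulw (invw w) v.
Proof.
  intro Hv. symmetry.
  transitivity (mulw (invw w) (mulw w (mulw (invw (red w)) v))).
  - f_equal. rewrite -(mulw_red_l w). 2: apply mulw_reduced; exact Hv.
    symmetry. apply mulw_invw_r. exact Hv.
  - apply mulw_invw. apply mulw_reduced; exact Hv.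
Qed.

Lemma sdinv_mk w k : sdinv (mkSD w k) = mkSD (map (relab (ginv G k)) (invw w)) (ginv G k).
Proof.
  apply mkSD_eq; [|reflexivity]. unfold sdinv. rewrite sdw_mk sdk_mk.
  unfold red. rewrite -(map_relab_mulw (ginv G k) (invw (mulw w [])) []).
  rewrite -(map_relab_mulw (ginv G k) (invw w) []). f_equal.
  apply mulw_red_invw. simpl; auto.
Qed.

Lemma red_map_relab k w : red (map (relab k) w) = map (relab k) (red w).
Proof. unfold red. rewrite map_relab_mulw. reflexivity. Qed.

Lemma sd_assoc p q r : sdmul p (sdmul q r) = sdmul (sdmul p q) r.
Proof.
  rewrite (SD_eta p) (SD_eta q) (SD_eta r). rewrite !sdmul_mk.
  apply mkSD_eq. 2: apply gmulA.
  rewrite map_app -map_relab_mul app_assoc. reflexivity.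
Qed.
Lemma sd_id p : sdmul sdone p = p.
Proof.
  rewrite (SD_eta p). unfold sdone. rewrite sdmul_mk. apply mkSD_eq. 2: apply gmul1.
  simpl. rewrite map_relab_one. reflexivity.
Qed.
Lemma sd_inv p : sdmul (sdinv p) p = sdone.
Proof.
  rewrite (SD_eta p). rewrite sdinv_mk sdmul_mk. unfold sdone. apply mkSD_eq. 2: apply gmulV.
  rewrite -map_app red_map_relab red_app (red_id (sdw_reduced p)).
  rewrite mulw_invw_self. 2: apply sdw_reduced. reflexivity.
Qed.

Definition SDG : group_on SDt := @GroupOn _ sdmul sdone sdinv sd_assoc sd_id sd_inv.

Definition emb (g : T) : SDt := mkSD [] g.
Definition tgen (j : J) : SDt := mkSD [((gone G, j), true)] (gone G).
Lemma emb_hom : is_hom G SDG emb.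
Proof. intros x y. simpl. unfold emb. rewrite sdmul_mk. reflexivity. Qed.
Lemma emb_inj : injective emb.
Proof. intros x y E. apply (f_equal sdk) in E. exact E. Qed.

Section Univ.
Variables (V : Type) (M : group_on V) (alpha : T -> V) (halpha : is_hom G M alpha) (m : J -> V).
Local Notation "x ** y" := (gmul M x y) (at level 40, left associativity).
Local Notation iM := (ginv M).

Definition evl (x : letter) : V :=
  let e := alpha (fst (fst x)) ** m (snd (fst x)) ** iM (alpha (fst (fst x))) in
  if snd x then e else iM e.
Fixpoint evw (w : list letter) : V :=
  match w with [] => gone M | x :: w' => evl x ** evw w' end.

Lemma evl_linv x : evl (linv x) = iM (evl x).
Proof. destruct x as [[h j] b]; unfold evl, linv; simpl. destruct b; simpl; auto. rewrite ginvK. reflexivity. Qed.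

Lemma evw_cr x w : evw (cr x w) = evl x ** evw w.
Proof.
  destruct w as [|y w']; simpl; auto.
  destruct (dec (y = linv x)) as [E|E]; simpl; auto.
  subst y. rewrite evl_linv gmulA gmulVr gmul1. reflexivity.
Qed.
Lemma evw_mulw u v : evw (mulw u v) = evw u ** evw v.
Proof. induction u as [|x u IH]; simpl. rewrite gmul1; auto. rewrite evw_cr IH gmulA. reflexivity. Qed.
Lemma evw_app u v : evw (app u v) = evw u ** evw v.
Proof. induction u as [|x u IH]; simpl. rewrite gmul1; auto. rewrite IH gmulA. reflexivity. Qed.
Lemma evw_red w : evw (red w) = evw w.
Proof. unfold red. rewrite evw_mulw. simpl. apply gmul1r. Qed.

Lemma evl_relab k x : evl (relab k x) = alpha k ** evl x ** iM (alpha k).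
Proof.
  destruct x as [[h j] b]; unfold evl, relab; simpl. rewrite halpha.
  destruct b.
  - rewrite !ginvM !gmulA. reflexivity.
  - rewrite !ginvM !ginvK !gmulA. reflexivity.
Qed.
Lemma evw_relab k w : evw (map (relab k) w) = alpha k ** evw w ** iM (alpha k).
Proof.
  induction w as [|x w IH]; simpl.
  - rewrite gmul1r gmulVr. reflexivity.
  - rewrite IH evl_relab. rewrite !gmulA gmulKVr. reflexivity.
Qed.

Definition Phi (p : SDt) : V := evw (sdw p) ** alpha (sdk p).
Lemma Phi_mk w k : Phi (mkSD w k) = evw w ** alpha k.
Proof. unfold Phi. rewrite sdw_mk sdk_mk evw_red. reflexivity. Qed.
Lemma Phi_hom : is_hom SDG M Phi.
Proof.
  intros p q. rewrite (SD_eta p) (SD_eta q). simpl. rewrite sdmul_mk !Phi_mk.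
  rewrite evw_app evw_relab halpha. rewrite !gmulA gmulKVr. reflexivity.
Qed.
Lemma Phi_emb g : Phi (emb g) = alpha g.
Proof. unfold emb. rewrite Phi_mk. simpl. apply gmul1. Qed.
Lemma Phi_tgen j : Phi (tgen j) = m j.
Proof.
  unfold tgen. rewrite Phi_mk. simpl. unfold evl; simpl.
  rewrite (hom1 halpha) ginv1 !gmul1r gmul1. reflexivity.
Qed.
End Univ.

Lemma SD_letter_gen h j : mkSD [((h, j), true)] (gone G) = sdmul (sdmul (emb h) (tgen j)) (sdinv (emb h)).
Proof.
  unfold emb, tgen. rewrite sdinv_mk !sdmul_mk. apply mkSD_eq.
  - simpl. unfold relab; simpl. rewrite !gmul1r. reflexivity.
  - rewrite gmul1r gmulVr. reflexivity.
Qed.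

Lemma SD_unique (V : Type) (M : group_on V) (P1 P2 : SDt -> V) :
  is_hom SDG M P1 -> is_hom SDG M P2 ->
  (forall g, P1 (emb g) = P2 (emb g)) -> (forall j, P1 (tgen j) = P2 (tgen j)) ->
  forall p, P1 p = P2 p.
Proof.
  intros H1 H2 Ee Et.
  assert (Hl : forall h j, P1 (mkSD [((h, j), true)] (gone G)) = P2 (mkSD [((h, j), true)] (gone G))).
  { intros h j. rewrite SD_letter_gen.
    change (P1 (gmul SDG (gmul SDG (emb h) (tgen j)) (ginv SDG (emb h))) = P2 (gmul SDG (gmul SDG (emb h) (tgen j)) (ginv SDG (emb h)))).
    rewrite H1 H2 H1 H2 (homV H1) (homV H2) !Ee Et. reflexivity. }
  assert (Hl' : forall x, P1 (mkSD [x] (gone G)) = P2 (mkSD [x] (gone G))).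
  { intros [[h j] b]. destruct b. apply Hl.
    assert (E : mkSD [((h, j), false)] (gone G) = sdinv (mkSD [((h, j), true)] (gone G))).
    { rewrite sdinv_mk. apply mkSD_eq. 2: rewrite ginv1; reflexivity.
      simpl. unfold relab; simpl. rewrite ginv1 gmul1. reflexivity. }
    rewrite E. change (P1 (ginv SDG (mkSD [(h, j, true)] (gone G))) = P2 (ginv SDG (mkSD [(h, j, true)] (gone G)))).
    rewrite (homV H1) (homV H2) Hl. reflexivity. }
  assert (Hw : forall w, P1 (mkSD w (gone G)) = P2 (mkSD w (gone G))).
  { induction w as [|x w IH].
    - change (mkSD [] (gone G)) with (emb (gone G)). apply Ee.
    - assert (E : mkSD (x :: w) (gone G) = sdmul (mkSD [x] (gone G)) (mkSD w (gone G))).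
      { rewrite sdmul_mk. apply mkSD_eq. 2: rewrite gmul1; reflexivity.
        simpl. rewrite map_relab_one. reflexivity. }
      rewrite E. change (P1 (gmul SDG (mkSD [x] (gone G)) (mkSD w (gone G))) = P2 (gmul SDG (mkSD [x] (gone G)) (mkSD w (gone G)))).
      rewrite H1 H2 Hl' IH. reflexivity. }
  intro p. rewrite (SD_eta p).
  assert (E : mkSD (sdw p) (sdk p) = sdmul (mkSD (sdw p) (gone G)) (emb (sdk p))).
  { unfold emb. rewrite sdmul_mk. apply mkSD_eq. 2: rewrite gmul1; reflexivity.
    simpl. rewrite app_nil_r. reflexivity. }
  rewrite E. change (P1 (gmul SDG (mkSD (sdw p) (gone G)) (emb (sdk p))) = P2 (gmul SDG (mkSD (sdw p) (gone G)) (emb (sdk p)))).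
  rewrite H1 H2 Hw Ee. reflexivity.
Qed.
End SD.

Section Canc.
Variables (T J : Type).
Local Notation letter := ((T * J) * bool)%type.

Fixpoint cancl (ru v : list letter) : nat :=
  match ru, v with
  | x :: ru', y :: v' => if dec (y = linv x) then S (cancl ru' v') else 0
  | _, _ => 0
  end.

Lemma reduced_app (a b : list letter) :
  reduced (app a b) <-> reduced a /\ reduced b /\
     (forall x y a' b', a = app a' [x] -> b = y :: b' -> y <> linv x).
Proof.
  induction a as [|z a IH]; simpl.
  - split. intro H. split; auto. split; auto. intros x y a' b' E. destruct a'; discriminate.
    tauto.
  - destruct a as [|z' a].
    + simpl. destruct b as [|y b]; simpl.
      * split; [intros _; repeat split; auto; intros x y a' b' _ E; discriminate | auto].
      * split.
        -- intros [H1 H2]. repeat split; auto. intros x y0 a' b' E1 E2.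
           injection E2 as -> ->. destruct a' as [|q a']; simpl in E1. injection E1 as ->. exact H1.
           injection E1 as _ E1. destruct a'; discriminate.
        -- intros [_ [H2 H3]]. split; auto. apply (H3 z y [] b); reflexivity.
    + simpl in *. split.
      * intros [H1 H2]. apply IH in H2. destruct H2 as [Ha [Hb Hc]]. repeat split; auto.
        intros x y a' b' E1 E2. destruct a' as [|q a']. simpl in E1. injection E1 as _ E1. destruct a; discriminate.
        simpl in E1. injection E1 as _ E1. apply (Hc x y a' b'); auto.
      * intros [[H1 H2] [Hb Hc]]. split; auto. apply IH. repeat split; auto.
        intros x y a' b' E1 E2. apply (Hc x y (z :: a') b'); auto. rewrite E1. reflexivity.
Qed.

Lemma reduced_app_l (a b : list letter) : reduced (app a b) -> reduced a.
Proof. intro H. apply reduced_app in H. tauto. Qed.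
Lemma reduced_app_r (a b : list letter) : reduced (app a b) -> reduced b.
Proof. intro H. apply reduced_app in H. tauto. Qed.

Lemma cancl_snoc_zero (u : list letter) x w : reduced (app u [x]) -> cancl (rev u) (x :: w) = 0.
Proof.
  intro Hu. destruct (rev u) as [|z ru] eqn:Er; simpl; auto.
  destruct (dec (x = linv z)) as [E2|E2]; auto.
  exfalso. apply reduced_app in Hu. destruct Hu as [_ [_ H3]].
  apply (H3 z x (rev ru) []); auto. rewrite <- (rev_involutive u). rewrite Er. reflexivity.
Qed.

Lemma firstn_app_le (A : Type) n (u w : list A) : n <= length u -> firstn n (app u w) = firstn n u.
Proof. intro H. rewrite firstn_app. assert (E : Nat.sub n (length u) = 0) by lia. rewrite E. simpl. apply app_nil_r. Qed.

Lemma mulw_canc (u v : list letter) : reduced u -> reduced v ->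
  mulw u v = app (firstn (length u - cancl (rev u) v) u) (skipn (cancl (rev u) v) v).
Proof.
  revert v. induction u as [|x u IH] using rev_ind; intros v Hu Hv.
  - simpl. reflexivity.
  - assert (Hr : rev (app u [x]) = x :: rev u) by (rewrite rev_app_distr; reflexivity).
    rewrite Hr mulw_app length_app.
    change (mulw [x] v) with (cr x v). change (length [x]) with 1.
    assert (Hu' : reduced u) by exact (reduced_app_l Hu).
    assert (Hcase : (exists v', v = linv x :: v') \/ (cancl (x :: rev u) v = 0 /\ cr x v = x :: v)).
    { destruct v as [|y v']. right; simpl; auto.
      simpl. destruct (dec (y = linv x)) as [E|E]. left. exists v'. rewrite E. reflexivity. right; auto. }
    destruct Hcase as [[v' Ev]|[H0 Hcr]].
    + subst v.
      assert (E1 : cr x (linv x :: v') = v').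
      { simpl. destruct (dec (linv x = linv x)) as [E0|E]; auto. exfalso; apply E; reflexivity. }
      assert (E2 : cancl (x :: rev u) (linv x :: v') = S (cancl (rev u) v')).
      { simpl. destruct (dec (linv x = linv x)) as [E0|E]; auto. exfalso; apply E; reflexivity. }
      rewrite E1 E2.
      rewrite IH; auto. 2: exact (reduced_tail Hv).
      replace (Nat.add (length u) 1 - S (cancl (rev u) v')) with (length u - cancl (rev u) v') by lia.
      assert (Hle : length u - cancl (rev u) v' <= length u) by lia. rewrite (firstn_app_le _ Hle). reflexivity.
    + rewrite H0 Hcr. rewrite IH; auto.
      2: { destruct v as [|y v']; simpl; auto. simpl in Hcr. destruct (dec (y = linv x)); [|auto].
           exfalso. apply (f_equal (@length _)) in Hcr. simpl in Hcr. lia. }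
      rewrite (cancl_snoc_zero _ Hu). simpl.
      replace (length u - 0) with (length u) by lia.
      replace (Nat.add (length u) 1 - 0) with (length (app u [x])) by (rewrite length_app; simpl; lia).
      rewrite !firstn_all. rewrite <- app_assoc. reflexivity.
Qed.

Lemma cancl_le_l ru v : cancl ru v <= length ru.
Proof. revert v; induction ru as [|x ru IH]; intros [|y v]; simpl; try lia. destruct (dec _); simpl; try lia. specialize (IH v); lia. Qed.
Lemma cancl_le_r ru v : cancl ru v <= length v.
Proof. revert v; induction ru as [|x ru IH]; intros [|y v]; simpl; try lia. destruct (dec _); simpl; try lia. specialize (IH v); lia. Qed.

Lemma cancl_prefix ru V m R : cancl ru V < m -> m <= length V -> cancl ru (app (firstn m V) R) = cancl ru V.
Proof.
  revert V m. induction ru as [|x ru IH]; intros V m H1 H2; simpl; auto.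
  destruct V as [|y V']; simpl in *. lia.
  destruct m as [|m']. lia. simpl.
  destruct (dec (y = linv x)) as [E|E]; simpl in *; auto.
  all: f_equal; apply IH; lia.
Qed.

Lemma invw_reduced (u : list letter) : reduced u -> reduced (invw u).
Proof.
  induction u as [|x u IH]; intros H. simpl; auto.
  assert (E0 : invw (x :: u) = app (invw u) [linv x]) by reflexivity.
  rewrite E0. apply reduced_app. split; [apply IH; exact (reduced_tail H)|]. split; [simpl; auto|].
  intros x' y a' b' E1 E2. injection E2 as E2 _. subst y.
  destruct u as [|u0 u'].
  - simpl in E1. destruct a'; simpl in E1; discriminate.
  - assert (E3 : invw (u0 :: u') = app (invw u') [linv u0]) by reflexivity.
    rewrite E3 in E1. apply app_inj_tail in E1. destruct E1 as [_ E1]. subst x'.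
    rewrite linvK. intro E. simpl in H. destruct H as [H _]. apply H. symmetry. exact E.
Qed.

Lemma cancl3 a1 a2 a3 r b1 b2 b3 v : 3 <= cancl (a1 :: a2 :: a3 :: r) (b1 :: b2 :: b3 :: v) ->
  b1 = linv a1 /\ b2 = linv a2 /\ b3 = linv a3.
Proof.
  simpl. destruct (dec (b1 = linv a1)); [|simpl; lia].
  destruct (dec (b2 = linv a2)); [|simpl; lia].
  destruct (dec (b3 = linv a3)); [|simpl; lia]. auto.
Qed.
Lemma cancl1 a r b v : 1 <= cancl (a :: r) (b :: v) -> b = linv a.
Proof. simpl. destruct (dec (b = linv a)); [auto|simpl; lia]. Qed.

Section SC.
Variables (J1 : Type) (img : ((T * J1) * bool)%type -> list letter).
Hypotheses (img_red : forall x, reduced (img x)) (img_ne : forall x, img x <> [])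
  (Hc : forall x y, y <> linv x -> 2 * cancl (rev (img x)) (img y) < length (img x) /\
                                   2 * cancl (rev (img x)) (img y) < length (img y)).

Definition subw (ws : list (((T * J1) * bool)%type)) : list letter := fold_right (fun x acc => mulw (img x) acc) [] ws.
Lemma subw_reduced ws : reduced (subw ws).
Proof. induction ws; simpl; auto. apply mulw_reduced; auto. Qed.

Lemma subw_inv x ws : reduced (x :: ws) ->
  exists m R, subw (x :: ws) = app (firstn m (img x)) R /\ length (img x) < 2 * m /\ m <= length (img x).
Proof.
  revert x. induction ws as [|y ws IH]; intros x Hr.
  - exists (length (img x)), []. simpl. rewrite mulw_nil_r; auto. rewrite firstn_all app_nil_r. split; auto.
    split; auto. destruct (img x) eqn:E. exfalso; exact (img_ne E). simpl; lia.
  - destruct (IH y (reduced_tail Hr)) as [m [R [E1 [E2 E3]]]].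
    assert (Hyx : y <> linv x) by (simpl in Hr; tauto).
    destruct (Hc Hyx) as [C1 C2].
    set (S' := subw (y :: ws)) in *.
    assert (Hcc : cancl (rev (img x)) S' = cancl (rev (img x)) (img y)).
    { rewrite E1. apply cancl_prefix; lia. }
    exists (length (img x) - cancl (rev (img x)) (img y)), (skipn (cancl (rev (img x)) S') S').
    split.
    + change (subw (x :: y :: ws)) with (mulw (img x) S'). rewrite mulw_canc; auto.
      2: apply subw_reduced. rewrite Hcc. reflexivity.
    + lia.
Qed.

Lemma subw_nonempty ws : reduced ws -> ws <> [] -> subw ws <> [].
Proof.
  destruct ws as [|x ws]. tauto. intros Hr _.
  destruct (subw_inv Hr) as [m [R [E1 [E2 E3]]]]. rewrite E1.
  destruct (img x) as [|z l] eqn:E. exfalso; exact (img_ne E).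
  destruct m as [|m]. simpl in E2; lia. simpl. discriminate.
Qed.
End SC.
End Canc.

Section HNN.
Variables (P Q : Type) (K : group_on P) (Uh : group_on Q).
Local Notation "x * y" := (gmul K x y).

Section Coset.
Variables (i : Q -> P) (hi : is_hom Uh K i) (ii : injective i).
Definition sameU (k r : P) : Prop := exists u, r = i u * k.
Definition rep (k : P) : P := pick (gone K) (sameU k).
Lemma sameU_refl k : sameU k k.
Proof. exists (gone Uh). rewrite (hom1 hi) gmul1. reflexivity. Qed.
Lemma rep_spec k : sameU k (rep k).
Proof. unfold rep. apply pick_spec. exists k. apply sameU_refl. Qed.
Lemma sameU_pred k k' : sameU k k' -> sameU k = sameU k'.
Proof.
  intros [u Hu]. apply functional_extensionality. intro r. apply propositional_extensionality.
  split; intros [v Hv].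
  - exists (gmul Uh v (ginv Uh u)). rewrite Hv Hu hi (homV hi) -gmulA gmulKl. reflexivity.
  - exists (gmul Uh v u). rewrite Hv Hu hi gmulA. reflexivity.
Qed.
Lemma rep_coset k k' : sameU k k' -> rep k = rep k'.
Proof. intro H. unfold rep. rewrite (sameU_pred H). reflexivity. Qed.
Definition co (k : P) : Q := ginv Uh (proj1_sig (constructive_indefinite_description _ (rep_spec k))).
Lemma co_spec k : k = i (co k) * rep k.
Proof.
  unfold co. destruct (constructive_indefinite_description _ _) as [u Hu]. simpl.
  rewrite Hu (homV hi) gmulKl. reflexivity.
Qed.
Lemma rep_rep k : rep (rep k) = rep k.
Proof. symmetry. apply rep_coset. apply rep_spec. Qed.
Lemma rep_mul u r : rep r = r -> rep (i u * r) = r.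
Proof. intro H. rewrite -(rep_coset (k:=r)). exact H. exists u. reflexivity. Qed.
Lemma co_mul u r : rep r = r -> co (i u * r) = u.
Proof.
  intro H. apply ii. pose proof (co_spec (i u * r)) as E. rewrite rep_mul in E; auto.
  apply gcancr in E. symmetry. exact E.
Qed.
End Coset.

Variables (i1 i2 : Q -> P) (h1 : is_hom Uh K i1) (h2 : is_hom Uh K i2)
  (inj1 : injective i1) (inj2 : injective i2).

Definition RA := {r : P | rep i1 r = r}.
Definition RB := {r : P | rep i2 r = r}.
Definition Om := ((nat -> RA) * (nat -> RB))%type.
Definition scons {A} (a : A) (s : nat -> A) : nat -> A := fun n => match n with 0 => a | S n' => s n' end.
Definition stail {A} (s : nat -> A) : nat -> A := fun n => s (S n).
Lemma scons_tail {A} (s : nat -> A) : scons (s 0) (stail s) = s.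
Proof. apply functional_extensionality. intros [|n]; reflexivity. Qed.
Lemma tail_scons {A} (a : A) s : stail (scons a s) = s.
Proof. reflexivity. Qed.

Definition bet (a : RA) (w : Om) : RB * Om := (snd w 0, (scons a (fst w), stail (snd w))).
Definition bet' (b : RB) (w : Om) : RA * Om := (fst w 0, (stail (fst w), scons b (snd w))).
Lemma bet'_bet a w : bet' (fst (bet a w)) (snd (bet a w)) = (a, w).
Proof. destruct w as [sa sb]. unfold bet, bet'; simpl. rewrite scons_tail. reflexivity. Qed.
Lemma bet_bet' b w : bet (fst (bet' b w)) (snd (bet' b w)) = (b, w).
Proof. destruct w as [sa sb]. unfold bet, bet'; simpl. rewrite scons_tail. reflexivity. Qed.

Definition X := (P * Om)%type.
Definition ra (k : P) : RA := exist _ (rep i1 k) (rep_rep h1 k).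
Definition rb (k : P) : RB := exist _ (rep i2 k) (rep_rep h2 k).

Definition thf (x : X) : X :=
  let p := bet (ra (fst x)) (snd x) in (i2 (co h1 (fst x)) * proj1_sig (fst p), snd p).
Definition thg (x : X) : X :=
  let p := bet' (rb (fst x)) (snd x) in (i1 (co h2 (fst x)) * proj1_sig (fst p), snd p).

Lemma RB_eq (b b' : RB) : proj1_sig b = proj1_sig b' -> b = b'.
Proof. destruct b, b'; simpl; intro; subst; f_equal; apply proof_irrelevance. Qed.
Lemma RA_eq (b b' : RA) : proj1_sig b = proj1_sig b' -> b = b'.
Proof. destruct b, b'; simpl; intro; subst; f_equal; apply proof_irrelevance. Qed.

Lemma thg_thf x : thg (thf x) = x.
Proof.
  destruct x as [k w].
  assert (Hb : rep i2 (proj1_sig (fst (bet (ra k) w))) = proj1_sig (fst (bet (ra k) w))) by exact (proj2_sig (fst (bet (ra k) w))).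
  unfold thg, thf. cbv zeta. cbn [fst snd].
  rewrite (co_mul h2 inj2 _ Hb).
  assert (E : rb (i2 (co h1 k) * proj1_sig (fst (bet (ra k) w))) = fst (bet (ra k) w)).
  { apply RB_eq. unfold rb. cbn [proj1_sig]. apply (rep_mul h2). exact Hb. }
  rewrite E bet'_bet. cbn [fst snd]. unfold ra. cbn [proj1_sig]. rewrite -co_spec. reflexivity.
Qed.
Lemma thf_thg x : thf (thg x) = x.
Proof.
  destruct x as [k w].
  assert (Ha : rep i1 (proj1_sig (fst (bet' (rb k) w))) = proj1_sig (fst (bet' (rb k) w))) by exact (proj2_sig (fst (bet' (rb k) w))).
  unfold thg, thf. cbv zeta. cbn [fst snd].
  rewrite (co_mul h1 inj1 _ Ha).
  assert (E : ra (i1 (co h2 k) * proj1_sig (fst (bet' (rb k) w))) = fst (bet' (rb k) w)).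
  { apply RA_eq. unfold ra. cbn [proj1_sig]. apply (rep_mul h1). exact Ha. }
  rewrite E bet_bet'. cbn [fst snd]. unfold rb. cbn [proj1_sig]. rewrite -co_spec. reflexivity.
Qed.

Definition theta : perm X := Perm thf thg thg_thf thf_thg.

Definition rhof (k : P) (x : X) : X := (k * fst x, snd x).
Lemma rho_K k x : rhof (ginv K k) (rhof k x) = x.
Proof. destruct x; unfold rhof; simpl. rewrite gmulKl. reflexivity. Qed.
Lemma rho_KV k x : rhof k (rhof (ginv K k) x) = x.
Proof. destruct x; unfold rhof; simpl. rewrite gmulKVl. reflexivity. Qed.
Definition rho (k : P) : perm X := Perm (rhof k) (rhof (ginv K k)) (rho_K k) (rho_KV k).

Lemma rho_hom : is_hom K (permG X) rho.
Proof. intros k k'. apply perm_ext. intros [p w]. unfold rho, rhof; simpl. rewrite gmulA. reflexivity. Qed.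

Definition om0 : Om := (fun _ => ra (gone K), fun _ => rb (gone K)).
Lemma rho_inj : injective rho.
Proof.
  intros k k' E. apply (f_equal (fun p => pfun p (gone K, om0))) in E. simpl in E. unfold rhof in E; simpl in E.
  injection E as E. rewrite !gmul1r in E. exact E.
Qed.

Lemma theta_rel u : gmul (permG X) theta (rho (i1 u)) = gmul (permG X) (rho (i2 u)) theta.
Proof.
  apply perm_ext. intros [k w]. simpl. unfold thf, rhof; simpl.
  assert (E1 : ra (i1 u * k) = ra k).
  { apply RA_eq. simpl. symmetry. apply (rep_coset h1). exists u. reflexivity. }
  rewrite E1.
  assert (E2 : co h1 (i1 u * k) = gmul Uh u (co h1 k)).
  { rewrite {1}(co_spec h1 k) gmulA -h1. apply (co_mul h1 inj1). apply rep_rep; auto. }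
  rewrite E2 h2 gmulA. reflexivity.
Qed.
End HNN.

Theorem HNN_embed (P Q : Type) (K : group_on P) (Uh : group_on Q) (i1 i2 : Q -> P) :
  is_hom Uh K i1 -> is_hom Uh K i2 -> injective i1 -> injective i2 ->
  exists (Y : Type) (rh : P -> perm Y) (th : perm Y),
    is_hom K (permG Y) rh /\ injective rh /\
    forall u, gmul (permG Y) th (rh (i1 u)) = gmul (permG Y) (rh (i2 u)) th.
Proof.
  intros h1 h2 j1 j2. eexists. exists (rho K i1 i2), (theta h1 h2 j1 j2).
  split. apply rho_hom. split. apply (rho_inj h1 h2). intro u. exact (theta_rel h1 h2 j1 j2 u).
Qed.

Ltac gnorm := repeat progress (rewrite ?ginvM ?ginvK ?ginv1 ?gmul1 ?gmul1r ?gmulA ?gmulKr ?gmulKVr ?gmulVr ?gmulV).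

Lemma conj_hom (A B : Type) (GA : group_on A) (GB : group_on B) (a : A -> B) (c : B) :
  is_hom GA GB a -> is_hom GA GB (fun x => gmul GB (gmul GB c (a x)) (ginv GB c)).
Proof. intros H x y. rewrite H. gnorm. reflexivity. Qed.

Lemma hom_shape (A B : Type) (GA : group_on A) (GB : group_on B) (h : A -> B) (hh : is_hom GA GB h) a b c :
  h (gmul GA a (gmul GA b (gmul GA c (gmul GA (ginv GA a) (gmul GA (ginv GA b) (ginv GA b)))))) =
  gmul GB (h a) (gmul GB (h b) (gmul GB (h c) (gmul GB (ginv GB (h a)) (gmul GB (ginv GB (h b)) (ginv GB (h b)))))).
Proof. rewrite !hh !(homV hh). reflexivity. Qed.

Definition W1 (U : Type) (M : group_on U) (x y : U) : U :=
  let A := gmul M (gmul M y x) (ginv M y) in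
  let B := gmul M (gmul M (ginv M y) x) y in
  gmul M (gmul M (gmul M y (gmul M A (gmul M x (gmul M B (gmul M (ginv M A) (gmul M (ginv M x) (ginv M x)))))))
                 (ginv M y))
         (ginv M (gmul M B (gmul M A (gmul M x (gmul M (ginv M B) (gmul M (ginv M A) (ginv M A))))))).

Lemma conj_mul3 (A : Type) (M : group_on A) c a b :
  gmul M (gmul M c (gmul M (gmul M a b) (ginv M a))) (ginv M c) =
  gmul M (gmul M (gmul M (gmul M c a) (ginv M c)) (gmul M (gmul M c b) (ginv M c)))
         (ginv M (gmul M (gmul M c a) (ginv M c))).
Proof. gnorm. reflexivity. Qed.

Section Core.
Variables (T : Type) (G : group_on T) (f : T -> T).

Definition JU := option {g : T | g <> gone G}.
Local Notation KK := (SDG G bool).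
Local Notation KU := (SDG G JU).
Local Notation SK := (SDt T bool).
Local Notation SU := (SDt T JU).

Definition ta : SK := tgen G true.
Definition tb : SK := tgen G false.
Definition eK (g : T) : SK := emb bool g.
Definition cjK (c x : SK) : SK := gmul KK (gmul KK c x) (ginv KK c).
Definition ga (g : T) : SK := cjK ta (eK g).
Definition gb (g : T) : SK := cjK tb (eK g).

Definition ylist (g : T) : list ((T * bool) * bool) :=
  [((gone G, true), true); ((g, true), false); ((gmul G g g, false), true);
   ((gmul G (gmul G g g) g, false), false); ((gmul G (gmul G g g) g, true), true); ((gmul G g g, true), false)].
Definition Yp (g : T) : SK := mkSD (ylist g) (gone G).

Lemma mkK_mul w k w' k' : gmul KK (mkSD w k) (mkSD w' k') = mkSD (app w (map (relab G k) w')) (gmul G k k').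
Proof. apply sdmul_mk. Qed.
Lemma mkK_inv w k : ginv KK (mkSD w k) = mkSD (map (relab G (ginv G k)) (invw w)) (ginv G k).
Proof. apply sdinv_mk. Qed.

Lemma Yform g : Yp g = gmul KK (ga g) (gmul KK (eK g) (gmul KK (gb g)
                 (gmul KK (ginv KK (ga g)) (gmul KK (ginv KK (eK g)) (ginv KK (eK g)))))).
Proof.
  unfold Yp, ga, gb, cjK, eK, ta, tb, tgen, emb.
  repeat (first [erewrite mkK_mul | erewrite mkK_inv]).
  apply mkSD_eq.
  - f_equal. simpl. unfold ylist, relab. simpl. gnorm. reflexivity.
  - gnorm. reflexivity.
Qed.

Lemma eK_hom : is_hom G KK eK.
Proof. exact (emb_hom G bool). Qed.
Lemma ga_hom : is_hom G KK ga.
Proof. exact (conj_hom ta eK_hom). Qed.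
Lemma gb_hom : is_hom G KK gb.
Proof. exact (conj_hom tb eK_hom). Qed.

Definition sig_m (j : bool) : SK := if j then gmul KK tb (ginv KK ta) else ginv KK ta.
Definition sigK : SK -> SK := Phi KK ga sig_m.
Lemma sig_hom : is_hom KK KK sigK.
Proof. exact (Phi_hom ga_hom sig_m). Qed.
Lemma sig_emb g : sigK (eK g) = ga g.
Proof. apply Phi_emb. Qed.
Lemma sig_ta : sigK ta = gmul KK tb (ginv KK ta).
Proof. exact (Phi_tgen ga_hom sig_m true). Qed.
Lemma sig_tb : sigK tb = ginv KK ta.
Proof. exact (Phi_tgen ga_hom sig_m false). Qed.

Definition vsig_m (j : bool) : SK := if j then ginv KK tb else gmul KK ta (ginv KK tb).
Definition vsigK : SK -> SK := Phi KK gb vsig_m.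
Lemma vsig_hom : is_hom KK KK vsigK.
Proof. exact (Phi_hom gb_hom vsig_m). Qed.
Lemma vsig_emb g : vsigK (eK g) = gb g.
Proof. apply Phi_emb. Qed.
Lemma vsig_ta : vsigK ta = ginv KK tb.
Proof. exact (Phi_tgen gb_hom vsig_m true). Qed.
Lemma vsig_tb : vsigK tb = gmul KK ta (ginv KK tb).
Proof. exact (Phi_tgen gb_hom vsig_m false). Qed.

Lemma sig_ga g : sigK (ga g) = gb g.
Proof.
  unfold ga, cjK. rewrite !sig_hom (homV sig_hom) sig_ta sig_emb. unfold ga, gb, cjK. gnorm. reflexivity.
Qed.
Lemma sig_gb g : sigK (gb g) = eK g.
Proof.
  unfold gb, cjK. rewrite !sig_hom (homV sig_hom) sig_tb sig_emb. unfold ga, cjK. gnorm. reflexivity.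
Qed.

Lemma vsig_sig p : vsigK (sigK p) = p.
Proof.
  refine (SD_unique (P1 := fun p => vsigK (sigK p)) (P2 := fun p => p) _ _ _ _ p).
  - exact (hom_comp sig_hom vsig_hom).
  - intros x y. reflexivity.
  - intro g. change (emb bool g) with (eK g). rewrite sig_emb. unfold ga, cjK.
    rewrite !vsig_hom (homV vsig_hom) vsig_ta vsig_emb. unfold gb, cjK. gnorm. reflexivity.
  - intros [|].
    + change (tgen G true) with ta. rewrite sig_ta vsig_hom (homV vsig_hom) vsig_ta vsig_tb. gnorm. reflexivity.
    + change (tgen G false) with tb. rewrite sig_tb (homV vsig_hom) vsig_ta. gnorm. reflexivity.
Qed.
Lemma sig_inj : injective sigK.
Proof. intros x y E. rewrite -(vsig_sig x) -(vsig_sig y) E. reflexivity. Qed.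


(* ---------- the source group U^ = G * F(tb, y_g) ---------- *)
Definition tUb : SU := tgen G (J:=JU) None.
Definition yU (g : {g : T | g <> gone G}) : SU := tgen G (J:=JU) (Some g).
Definition eU (g : T) : SU := emb JU g.
Lemma eU_hom : is_hom G KU eU.
Proof. exact (emb_hom G JU). Qed.

Definition iota_m (j : JU) : SK := match j with None => tb | Some g => Yp (proj1_sig g) end.
Definition iotaK : SU -> SK := Phi KK eK iota_m.
Lemma iota_hom : is_hom KU KK iotaK.
Proof. exact (Phi_hom eK_hom iota_m). Qed.

Definition imgU (x : (T * JU) * bool) : list ((T * bool) * bool) :=
  match x with
  | ((h, None), b) => [((h, false), b)]
  | ((h, Some g), b) => if b then map (relab G h) (ylist (proj1_sig g))
                        else invw (map (relab G h) (ylist (proj1_sig g)))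
  end.

Lemma conj_eK h w : gmul KK (gmul KK (eK h) (mkSD w (gone G))) (ginv KK (eK h)) = mkSD (map (relab G h) w) (gone G).
Proof.
  unfold eK, emb. repeat (first [erewrite mkK_mul | erewrite mkK_inv]).
  apply mkSD_eq. f_equal. simpl. rewrite app_nil_r. reflexivity. gnorm. reflexivity.
Qed.
Lemma inv_mk1 w : ginv KK (mkSD w (gone G)) = mkSD (invw w) (gone G).
Proof. erewrite mkK_inv. apply mkSD_eq. f_equal. rewrite ginv1 map_relab_one. reflexivity. apply ginv1. Qed.
Lemma mul_mk1 w w' : gmul KK (mkSD w (gone G)) (mkSD w' (gone G)) = mkSD (app w w') (gone G).
Proof. erewrite mkK_mul. apply mkSD_eq. rewrite map_relab_one. reflexivity. apply gmul1. Qed.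

Lemma evl_img x : evl KK eK iota_m x = mkSD (imgU x) (gone G).
Proof.
  destruct x as [[h [g|]] b]; unfold evl; cbn [fst snd].
  - cbn [iota_m]. unfold Yp. rewrite conj_eK. destruct b; simpl; auto. apply inv_mk1.
  - cbn [iota_m]. unfold tb, tgen. rewrite conj_eK.
    assert (E : map (relab G h) [((gone G, false), true)] = [((h, false), true)]).
    { simpl. unfold relab; simpl. rewrite gmul1r. reflexivity. }
    rewrite E. destruct b; simpl; auto. apply inv_mk1.
Qed.

Lemma subw_reducedU ws : reduced (subw imgU ws).
Proof. apply subw_reduced. Qed.

Lemma evw_sub ws : evw KK eK iota_m ws = mkSD (subw imgU ws) (gone G).
Proof.
  induction ws as [|x ws IH].
  - reflexivity.
  - cbn [evw]. rewrite IH evl_img. erewrite mul_mk1. apply mkSD_eq. 2: reflexivity.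
    rewrite red_app (red_id (subw_reducedU ws)). symmetry. apply red_mulw. apply subw_reducedU.
Qed.

Lemma iotaK_mk ws k : iotaK (mkSD ws k) = mkSD (subw imgU ws) k.
Proof.
  unfold iotaK. rewrite Phi_mk evw_sub. unfold eK, emb. erewrite mkK_mul. apply mkSD_eq.
  rewrite map_relab_one app_nil_r. reflexivity. apply gmul1.
Qed.

Lemma ylist_reduced g : g <> gone G -> reduced (ylist g).
Proof.
  intro Hg. unfold ylist. simpl. unfold linv; simpl.
  repeat split; intro E; injection E; intros; try discriminate.
  - apply Hg. assumption.
  - apply Hg. apply (gmul_left_eq1 (x := gmul G g g)). assumption.
  - apply Hg. apply (gmul_left_eq1 (x := gmul G g g)). symmetry. assumption.
Qed.

Lemma imgU_red x : reduced (imgU x).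
Proof.
  destruct x as [[h [g|]] b]; cbn [imgU]. 2: exact I.
  destruct b; [|apply invw_reduced]; apply reduced_map_relab; apply ylist_reduced; exact (proj2_sig g).
Qed.
Lemma imgU_ne x : imgU x <> [].
Proof. destruct x as [[h [g|]] b]; simpl; [destruct b; simpl; discriminate | discriminate]. Qed.
Lemma imgU_len x : length (imgU x) = match snd (fst x) with None => 1 | Some _ => 6 end.
Proof. destruct x as [[h [g|]] b]; simpl; auto. destruct b; simpl; auto. Qed.

Lemma sig_eqU (g g' : {g : T | g <> gone G}) : proj1_sig g = proj1_sig g' -> g = g'.
Proof. destruct g, g'; simpl; intro; subst; f_equal; apply proof_irrelevance. Qed.

Lemma Hc_some h h' (g g' : {g : T | g <> gone G}) b b' :
  ((h', Some g'), b') <> linv ((h, Some g), b) ->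
  cancl (rev (imgU ((h, Some g), b))) (imgU ((h', Some g'), b')) < 3.
Proof.
  intro Hne. destruct g as [g Hg], g' as [g' Hg'].
  destruct (le_lt_dec 3 (cancl (rev (imgU ((h, Some (exist _ g Hg)), b))) (imgU ((h', Some (exist _ g' Hg')), b')))) as [H0|H0]; [exfalso|lia].
  assert (H : 3 <= cancl (rev (imgU ((h, Some (exist _ g Hg)), b))) (imgU ((h', Some (exist _ g' Hg')), b'))) by lia. clear H0.
  destruct b, b'; cbn [imgU ylist invw rev map app proj1_sig] in H; apply cancl3 in H; destruct H as [E1 [E2 E3]]; unfold linv in *; simpl in *;
    injection E1; injection E2; injection E3; intros; clear E1 E2 E3.
  - apply Hg'. apply (gmul_left_eq1 (G:=G) (x := g')). apply (gcancl (G:=G) (x := h')). rewrite H H0. reflexivity.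
  -
    assert (Eg : g' = g).
    { apply (gcancl (G:=G) (x := gmul G h (gmul G g g))). rewrite -{1}H1.
      transitivity (gmul G h (gmul G (gmul G g g) g)). rewrite -H. gnorm. reflexivity. gnorm. reflexivity. }
    subst g'. assert (Eh : h' = h) by (apply (gcancr (G:=G) (x := gmul G g g)); exact H1). subst h'.
    apply Hne. rewrite (sig_eqU (g := exist _ g Hg') (g' := exist _ g Hg) erefl). reflexivity.
  -
    assert (Eh : h' = h) by (rewrite !gmul1r in H1; exact H1). subst h'.
    assert (Eg : g' = g) by (apply (gcancl (G:=G) (x := h)); exact H0). subst g'.
    apply Hne. rewrite (sig_eqU (g := exist _ g Hg') (g' := exist _ g Hg) erefl). reflexivity.
  - apply Hg. apply (gmul_left_eq1 (G:=G) (x := g)). apply (gcancl (G:=G) (x := h)). rewrite -H H0. reflexivity.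
Qed.

Lemma cancl0_of (ru v : list ((T * bool) * bool)) :
  (forall a r b w, ru = a :: r -> v = b :: w -> b <> linv a) -> cancl ru v = 0.
Proof.
  intro H. destruct ru as [|a r], v as [|b w]; simpl; auto.
  destruct (dec (b = linv a)) as [E|E]; auto. exfalso. exact (H a r b w erefl erefl E).
Qed.

Lemma imgU_Hc x y : y <> linv x -> 2 * cancl (rev (imgU x)) (imgU y) < length (imgU x) /\
                                   2 * cancl (rev (imgU x)) (imgU y) < length (imgU y).
Proof.
  intro Hne. rewrite !imgU_len.
  destruct x as [[h [g|]] b], y as [[h' [g'|]] b']; cbn [fst snd].
  - pose proof (Hc_some Hne) as H. set (c := cancl _ _) in *. split; lia.
  - enough (cancl (rev (imgU (h, Some g, b))) (imgU (h', None, b')) = 0) as E0 by (rewrite E0; split; lia).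
    apply cancl0_of. intros a r b0 w E1 E2. destruct b; cbn [imgU ylist invw rev map app proj1_sig] in E1, E2;
    injection E1; injection E2; intros; subst; unfold linv, relab; simpl; discriminate.
  - enough (cancl (rev (imgU (h, None, b))) (imgU (h', Some g', b')) = 0) as E0 by (rewrite E0; split; lia).
    apply cancl0_of. intros a r b0 w E1 E2. destruct b'; cbn [imgU ylist invw rev map app proj1_sig] in E1, E2;
    injection E1; injection E2; intros; subst; unfold linv, relab; simpl; discriminate.
  - enough (cancl (rev (imgU (h, None, b))) (imgU (h', None, b')) = 0) as E0 by (rewrite E0; split; lia).
    apply cancl0_of. intros a r b0 w E1 E2. cbn [imgU rev app] in E1, E2.
    injection E1; injection E2; intros; subst. intro E. apply Hne. unfold linv in *; simpl in *.
    injection E; intros; subst. reflexivity.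
Qed.

Lemma iotaK_inj : injective iotaK.
Proof.
  apply (hom_inj_of_ker iota_hom). intros p Hp.
  rewrite (SD_eta p) in Hp |- *. rewrite iotaK_mk in Hp.
  change (gone KK) with (mkSD (J:=bool) [] (gone G)) in Hp.
  apply (f_equal (fun q => proj1_sig q)) in Hp. simpl in Hp. injection Hp as Hw Hk.
  rewrite (red_id (subw_reducedU _)) in Hw.
  destruct (sdw p) as [|x ws] eqn:E.
  - rewrite Hk. reflexivity.
  - exfalso. refine (subw_nonempty imgU_red imgU_ne imgU_Hc (ws := x :: ws) _ _ Hw).
    rewrite -E. apply sdw_reduced. discriminate.
Qed.

Definition tau_m (j : JU) : SU :=
  match j with None => tUb
  | Some g => gmul KU (gmul KU (gmul KU tUb (eU (f (proj1_sig g)))) (ginv KU tUb)) (yU g) end.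
Definition tau'_m (j : JU) : SU :=
  match j with None => tUb
  | Some g => gmul KU (gmul KU (gmul KU tUb (eU (ginv G (f (proj1_sig g))))) (ginv KU tUb)) (yU g) end.
Definition tauK := Phi KU eU tau_m.
Definition tau'K := Phi KU eU tau'_m.
Lemma tau_hom : is_hom KU KU tauK.
Proof. exact (Phi_hom eU_hom tau_m). Qed.
Lemma tau'_hom : is_hom KU KU tau'K.
Proof. exact (Phi_hom eU_hom tau'_m). Qed.

Lemma tau'_tau p : tau'K (tauK p) = p.
Proof.
  refine (SD_unique (P1 := fun p => tau'K (tauK p)) (P2 := fun p => p) _ _ _ _ p).
  - exact (hom_comp tau_hom tau'_hom).
  - intros x y. reflexivity.
  - intro g. unfold tauK, tau'K. rewrite !Phi_emb. reflexivity.
  - intros [g|].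
    + unfold tauK. rewrite (Phi_tgen eU_hom tau_m (Some g)). cbn [tau_m].
      rewrite !tau'_hom (homV tau'_hom). unfold tau'K. rewrite Phi_emb.
      change (tgen G (Some g)) with (yU g). unfold yU, tUb.
      rewrite !(Phi_tgen eU_hom tau'_m). cbn [tau'_m]. fold tUb. fold (yU g).
      rewrite (homV eU_hom). gnorm. reflexivity.
    + unfold tauK, tau'K. rewrite (Phi_tgen eU_hom tau_m None). cbn [tau_m]. unfold tUb.
      rewrite (Phi_tgen eU_hom tau'_m None). reflexivity.
Qed.
Lemma tau_inj : injective tauK.
Proof. intros x y E. rewrite -(tau'_tau x) -(tau'_tau y) E. reflexivity. Qed.

Definition psiK (u : SU) : SK := sigK (iotaK (tauK u)).
Lemma psi_hom : is_hom KU KK psiK.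
Proof. exact (hom_comp (hom_comp tau_hom iota_hom) sig_hom). Qed.
Lemma psi_inj : injective psiK.
Proof. intros x y E. apply tau_inj, iotaK_inj, sig_inj. exact E. Qed.

Lemma F_iota_eU g : iotaK (eU g) = eK g.
Proof. apply Phi_emb. Qed.
Lemma F_psi_eU g : psiK (eU g) = ga g.
Proof. unfold psiK, tauK. rewrite Phi_emb F_iota_eU sig_emb. reflexivity. Qed.
Lemma F_iota_tUb : iotaK tUb = tb.
Proof. exact (Phi_tgen eK_hom iota_m None). Qed.
Lemma F_psi_tUb : psiK tUb = ginv KK ta.
Proof. unfold psiK, tauK, tUb. rewrite (Phi_tgen eU_hom tau_m None). cbn [tau_m]. fold tUb. rewrite F_iota_tUb sig_tb. reflexivity. Qed.
Lemma F_iota_yU g : iotaK (yU g) = Yp (proj1_sig g).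
Proof. exact (Phi_tgen eK_hom iota_m (Some g)). Qed.
Lemma sigY g : sigK (Yp g) = gmul KK (gb g) (gmul KK (ga g) (gmul KK (eK g)
                 (gmul KK (ginv KK (gb g)) (gmul KK (ginv KK (ga g)) (ginv KK (ga g)))))).
Proof. rewrite Yform (hom_shape sig_hom) sig_ga sig_emb sig_gb. reflexivity. Qed.
Lemma F_psi_yU g : psiK (yU g) = gmul KK (eK (f (proj1_sig g))) (sigK (Yp (proj1_sig g))).
Proof.
  unfold psiK, tauK, yU. rewrite (Phi_tgen eU_hom tau_m (Some g)). cbn [tau_m]. fold (yU g).
  rewrite !iota_hom (homV iota_hom) F_iota_tUb F_iota_eU F_iota_yU.
  rewrite !sig_hom (homV sig_hom) sig_tb sig_emb. unfold ga, cjK. gnorm. reflexivity.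
Qed.

Lemma core1_sec : exists (U : Type) (M : group_on U) (iota : T -> U) (c : U),
  is_hom G M iota /\ injective iota /\ (forall x, iota x <> c) /\
  (forall g, g <> gone G -> W1 M (iota g) c = iota (f g)).
Proof.
  destruct (HNN_embed iota_hom psi_hom iotaK_inj psi_inj) as [Y [rh [th [Hrh [Hinj Hrel]]]]].
  pose (M := prodG (permG Y) ZG).
  pose (rhoM := fun k : SK => (rh k, 0%Z)).
  assert (rhoM_hom : is_hom KK M rhoM).
  { intros k k'. unfold rhoM. rewrite Hrh. reflexivity. }
  pose (cM := (th, 1%Z)).
  assert (CJ : forall u, gmul M (gmul M cM (rhoM (iotaK u))) (ginv M cM) = rhoM (psiK u)).
  { intro u. unfold cM, rhoM.
    change (gmul M (gmul M (th, 1%Z) (rh (iotaK u), 0%Z)) (ginv M (th, 1%Z)))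
      with (gmul (permG Y) (gmul (permG Y) th (rh (iotaK u))) (ginv (permG Y) th), (1 + 0 + - (1))%Z).
    rewrite Hrel gmulKr. reflexivity. }
  exists (perm Y * Z)%type, M, (fun g => rhoM (eK g)), cM.
  split; [|split; [|split]].
  - exact (hom_comp eK_hom rhoM_hom).
  - intros x y E. unfold rhoM in E. injection E as E. apply Hinj in E. exact (emb_inj E).
  - intros x E. unfold rhoM, cM in E. injection E as _ E. discriminate.
  - intros g Hg. pose (gs := exist (fun g => g <> gone G) g Hg).
    assert (HA : gmul M (gmul M cM (rhoM (eK g))) (ginv M cM) = rhoM (ga g)).
    { rewrite -F_iota_eU CJ F_psi_eU. reflexivity. }
    assert (HT : gmul M (gmul M cM (rhoM tb)) (ginv M cM) = rhoM (ginv KK ta)).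
    { rewrite -F_iota_tUb CJ F_psi_tUb. reflexivity. }
    assert (HB0 : gmul M (gmul M cM (rhoM (gb g))) (ginv M cM) = rhoM (eK g)).
    { unfold gb, cjK. rewrite !rhoM_hom (homV rhoM_hom) conj_mul3 HT HA.
      rewrite -(homV rhoM_hom) -!rhoM_hom. f_equal. unfold ga, cjK. gnorm. reflexivity. }
    assert (HB : gmul M (gmul M (ginv M cM) (rhoM (eK g))) cM = rhoM (gb g)).
    { rewrite -HB0. gnorm. reflexivity. }
    assert (HY : gmul M (gmul M cM (rhoM (Yp g))) (ginv M cM) = rhoM (gmul KK (eK (f g)) (sigK (Yp g)))).
    { assert (E : Yp g = iotaK (yU gs)) by (symmetry; apply F_iota_yU).
      rewrite {1}E CJ F_psi_yU. reflexivity. }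
    unfold W1. cbv zeta. rewrite HA HB.
    rewrite -(hom_shape rhoM_hom) -Yform HY.
    rewrite -(hom_shape rhoM_hom) -sigY.
    rewrite -(homV rhoM_hom) -rhoM_hom gmulKr. reflexivity.
Qed.
End Core.

Theorem core1 (T : Type) (G : group_on T) (f : T -> T) :
  exists (U : Type) (M : group_on U) (iota : T -> U) (c : U),
  is_hom G M iota /\ injective iota /\ (forall x, iota x <> c) /\
  (forall g, g <> gone G -> W1 M (iota g) c = iota (f g)).
Proof. exact (core1_sec G f). Qed.

Section Words.
Variable n' : nat.
Local Notation n := (S n').
Definition w1word (u : word n) : word n :=
  let A := wmul (wmul (wy n) u) (winv (wy n)) in
  let B := wmul (wmul (winv (wy n)) u) (wy n) in
  wmul (wmul (wmul (wy n) (wmul A (wmul u (wmul B (wmul (winv A) (wmul (winv u) (winv u)))))))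
             (winv (wy n)))
       (winv (wmul B (wmul A (wmul u (wmul (winv B) (wmul (winv A) (winv A))))))).
Lemma weval_w1 (U : Type) (H : group_on U) gs c u : weval H gs c (w1word u) = W1 H (weval H gs c u) c.
Proof. reflexivity. Qed.
Definition Cw : word n := w1word (wx (@ord0 n')).
Fixpoint Ew (m : nat) : word n :=
  match m with 0 => wone n | S m => wmul (Ew m) (wmul (wx (@inord n' m)) Cw) end.
Definition wfinal : word n := w1word (Ew n).
End Words.

Lemma SD_mul_mk (T J : Type) (G : group_on T) w k w' k' :
  gmul (SDG G J) (mkSD w k) (mkSD w' k') = mkSD (app w (map (relab G k) w')) (gmul G k k').
Proof. apply sdmul_mk. Qed.

Lemma reduced_pos (T J : Type) (l : list ((T * J) * bool)) : Forall (fun x => snd x = true) l -> reduced l.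
Proof.
  induction l as [|x l IH]; intro H; simpl; auto.
  destruct l as [|y l']; auto. inversion H as [|? ? Hx Hl]; subst.
  split. 2: apply IH; auto.
  inversion Hl as [|? ? Hy _]; subst. intro E. destruct x as [a b]; destruct y as [c d]; simpl in *.
  unfold linv in E; simpl in E. injection E as _ E. subst. discriminate.
Qed.

Section Stage.
Variables (T : Type) (G : group_on T) (n' : nat).
Local Notation n := (S n').
Variable f : {g : 'I_n -> T | forall i, g i <> gone G} -> T.
Local Notation K1 := (SDG G unit).
Local Notation S1 := (SDt T unit).
Definition t1 : S1 := tgen G tt.
Definition e1 (g : T) : S1 := emb unit g.

Fixpoint pp (gs : 'I_n -> T) (m : nat) : T :=
  match m with 0 => gone G | S m => gmul G (pp gs m) (gs (inord m)) end.
Fixpoint Elist (gs : 'I_n -> T) (m : nat) : list ((T * unit) * bool) :=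
  match m with 0 => [] | S m => app (Elist gs m) [((pp gs (S m), tt), true)] end.
Fixpoint E1 (gs : 'I_n -> T) (m : nat) : S1 :=
  match m with 0 => gone K1 | S m => gmul K1 (E1 gs m) (gmul K1 (e1 (gs (inord m))) t1) end.

Lemma E1_mk gs m : E1 gs m = mkSD (Elist gs m) (pp gs m).
Proof.
  induction m as [|m IH]. reflexivity.
  change (E1 gs (S m)) with (gmul K1 (E1 gs m) (gmul K1 (e1 (gs (inord m))) t1)).
  rewrite IH. unfold e1, t1, emb, tgen. erewrite SD_mul_mk. erewrite SD_mul_mk.
  apply mkSD_eq.
  - f_equal. simpl. unfold relab; simpl. gnorm. reflexivity.
  - simpl. gnorm. reflexivity.
Qed.

Lemma Elist_pos gs m : Forall (fun x => snd x = true) (Elist gs m).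
Proof. induction m; simpl; auto. apply Forall_app. split; auto. Qed.
Lemma Elist_red gs m : reduced (Elist gs m).
Proof. apply reduced_pos, Elist_pos. Qed.
Lemma Elist_len gs m : length (Elist gs m) = m.
Proof. induction m; simpl; auto. rewrite length_app IHm. simpl. lia. Qed.

Lemma Elist_pp gs gs' m : Elist gs m = Elist gs' m -> forall k, k <= m -> pp gs k = pp gs' k.
Proof.
  induction m as [|m IH]; intros E k Hk.
  - assert (k = 0) by lia. subst. reflexivity.
  - simpl in E. apply app_inj_tail in E. destruct E as [E1' E2]. injection E2 as E2.
    destruct (Nat.eq_dec k (S m)) as [->|Hne]. exact E2. apply IH; auto. lia.
Qed.

Lemma tuple_eq (gs gs' : 'I_n -> T) : Elist gs n = Elist gs' n -> gs = gs'.
Proof.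
  intro E. apply functional_extensionality. intro i. rewrite -(inord_val i).
  assert (Hi : (nat_of_ord i < n)%coq_nat) by (pose proof (ltn_ord i); lia).
  pose proof (Elist_pp E (k := nat_of_ord i) ltac:(lia)) as H1.
  pose proof (Elist_pp E (k := S (nat_of_ord i)) ltac:(lia)) as H2.
  simpl in H2. rewrite H1 in H2. apply gcancl in H2. exact H2.
Qed.

Definition Ptup (k : S1) (s : {g : 'I_n -> T | forall i, g i <> gone G}) : Prop := k = E1 (proj1_sig s) n.
Definition f1 (k : S1) : S1 :=
  match excluded_middle_informative (exists s, Ptup k s) with
  | left H => e1 (f (proj1_sig (constructive_indefinite_description _ H)))
  | right _ => if dec (exists g, g <> gone G /\ k = e1 g) then t1 else gone K1
  end.

Lemma E1_inj gs gs' : E1 gs n = E1 gs' n -> gs = gs'.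
Proof.
  rewrite !E1_mk. intro E. apply (f_equal (fun q => fst (proj1_sig q))) in E.
  change (red (Elist gs n) = red (Elist gs' n)) in E.
  rewrite !red_id in E; try apply Elist_red. apply tuple_eq. exact E.
Qed.

Lemma f1_E1 s : f1 (E1 (proj1_sig s) n) = e1 (f s).
Proof.
  unfold f1. destruct (excluded_middle_informative _) as [H|H].
  - destruct (constructive_indefinite_description _ H) as [s' Hs']. simpl. unfold Ptup in Hs'.
    apply E1_inj in Hs'. assert (E : s' = s).
    { destruct s, s'; simpl in *; subst; f_equal; apply proof_irrelevance. }
    rewrite E. reflexivity.
  - exfalso. apply H. exists s. reflexivity.
Qed.

Lemma e1_not_E1 g gs : e1 g <> E1 gs n.
Proof.
  rewrite E1_mk. intro E. apply (f_equal (fun q => length (fst (proj1_sig q)))) in E.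
  change (length (red (T:=T) (J:=unit) []) = length (red (Elist gs n))) in E.
  rewrite (red_id (Elist_red gs n)) Elist_len in E. simpl in E. discriminate.
Qed.

Lemma f1_e1 g : g <> gone G -> f1 (e1 g) = t1.
Proof.
  intro Hg. unfold f1. destruct (excluded_middle_informative _) as [[s Hs]|H].
  - exfalso. exact (e1_not_E1 Hs).
  - destruct (dec _) as [H1|H2]. reflexivity. exfalso. apply H2. exists g. split; auto.
Qed.

Lemma e1_hom : is_hom G K1 e1.
Proof. exact (emb_hom G unit). Qed.
Lemma e1_ne1 g : g <> gone G -> e1 g <> gone K1.
Proof. intros Hg E. apply Hg. apply (emb_inj (J:=unit)). exact E. Qed.
Lemma E1_ne1 gs : E1 gs n <> gone K1.
Proof. intro E. apply (e1_not_E1 (g := gone G) (gs := gs)). rewrite E. reflexivity. Qed.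

Lemma weval_gen (U : Type) (M : group_on U) (A : U -> Prop) (g : 'I_n -> GenT M A) c w :
  proj1_sig (weval (genG M A) g c w) = weval M (fun i => proj1_sig (g i)) (proj1_sig c) w.
Proof. induction w; simpl; auto; rewrite ?IHw1 ?IHw2 ?IHw; reflexivity. Qed.

Lemma stage_main : exists (U : Type) (H : group_on U) (iota : T -> U) (c : U),
    (is_hom G H iota /\ injective iota) /\
    (forall x, iota x <> c) /\
    (forall gs : {g : 'I_n -> T | forall i, g i <> gone G},
        weval H (fun i => iota (proj1_sig gs i)) c (wfinal n') = iota (f gs)) /\
    generated_by H (fun h => (exists x, h = iota x) \/ h = c).
Proof.
  destruct (core1 K1 f1) as [U [M [io [c [Hhom [Hinj [Hne Hrel]]]]]]].
  pose (A := fun m : U => (exists x, m = io (e1 x)) \/ m = c).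
  pose (iotaF := fun x : T => exist (Gen M A) (io (e1 x)) (@gen_base U M A _ (or_introl (ex_intro _ x erefl)))).
  pose (cF := exist (Gen M A) c (@gen_base U M A _ (or_intror erefl))).
  exists (GenT M A), (genG M A), iotaF, cF.
  split; [split|split; [|split]].
  - intros x y. apply GenT_eq. simpl. rewrite e1_hom Hhom. reflexivity.
  - intros x y E. apply (f_equal (@proj1_sig _ _)) in E. simpl in E. apply Hinj in E.
    exact (emb_inj (J:=unit) E).
  - intros x E. apply (f_equal (@proj1_sig _ _)) in E. simpl in E. exact (Hne _ E).
  - intro s. apply GenT_eq. rewrite weval_gen. unfold wfinal. rewrite weval_w1. unfold iotaF, cF. cbn [proj1_sig].
    set (gs := proj1_sig s).
    assert (HC : weval M (fun i => io (e1 (gs i))) c (Cw n') = io t1).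
    { unfold Cw. rewrite weval_w1. simpl. rewrite Hrel. rewrite f1_e1. reflexivity.
      exact (proj2_sig s _). apply e1_ne1. exact (proj2_sig s _). }
    assert (HE : forall m, weval M (fun i => io (e1 (gs i))) c (Ew n' m) = io (E1 gs m)).
    { induction m as [|m IH]. simpl. symmetry. apply (hom1 Hhom).
      cbn [Ew weval]. rewrite IH HC. rewrite -!Hhom. reflexivity. }
    rewrite HE Hrel. 2: apply E1_ne1. rewrite f1_E1. reflexivity.
  - intros S HS HA. apply (genG_generated HS). intros a Ha. apply HA.
    destruct Ha as [[x Hx]|Hc].
    + left. exists x. apply GenT_eq. simpl. exact Hx.
    + right. apply GenT_eq. simpl. exact Hc.
Qed.
End Stage.

Theorem lemma2p4 (n : nat) (hn : 1 <= n) :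
  exists w : word n,
  forall (T : Type) (G : group_on T)
         (f : {g : 'I_n -> T | forall i, g i <> gone G} -> T),
  exists (U : Type) (H : group_on U) (iota : T -> U) (c : U),
    (is_hom G H iota /\ injective iota) /\
    (forall x, iota x <> c) /\
    (forall gs : {g : 'I_n -> T | forall i, g i <> gone G},
        weval H (fun i => iota (proj1_sig gs i)) c w = iota (f gs)) /\
    generated_by H (fun h => (exists x, h = iota x) \/ h = c).
Proof.
  destruct n as [|n']. { exfalso. lia. }
  exists (wfinal n'). intros T G f. exact (stage_main f).
Qed.
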